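(* Let $n\ge2$ and $U=\exp\!\big(i\frac{\pi}{3\sqrt3}\sum_{j=1}^n j\,(X_j+Y_j+Z_j)\big)$. Then the map $a\mapsto UaU^\dagger$ restricts to a Lie algebra isomorphism from $\mathfrak a_{10}(n)$ onto $\mathfrak a_7(n)$.
   Context: Pauli matrices $I,X,Y,Z$; $A_j$ is $A$ acting on qubit $j$ (identity elsewhere); $A_jB_{j+1}$ denotes the length-$n$ Pauli string with $A$ at position $j$, $B$ at $j+1$, $I$ elsewhere. For a set $S$ of Pauli strings, $\mathrm{Lie}\langle S\rangle$ is the smallest real Lie subalgebra of $\mathfrak u(2^n)$ containing $\{iP:P\in S\}$. $\mathfrak a_{10}(n)=\mathrm{Lie}\langle X_jY_{j+1},Y_jZ_{j+1},Z_jX_{j+1}:1\le j\le n-1\rangle$ and $\mathfrak a_7(n)=\mathrm{Lie}\langle X_jX_{j+1},Y_jY_{j+1},Z_jZ_{j+1}:1\le j\le n-1\rangle$. *)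

(* Defs.v *)
From HB Require Import structures.
From mathcomp Require Import all_boot all_order all_algebra.
From mathcomp Require Import complex.
From mathcomp Require Import boolp classical_sets reals topology normedtype sequences trigo.
Set Implicit Arguments. Unset Strict Implicit. Unset Printing Implicit Defensive.
Import Order.TTheory GRing.Theory Num.Theory.
Import numFieldNormedType.Exports.
Local Open Scope ring_scope.

Section Pauli.
Variable R : realType.
Local Notation C := (R[i]).

Definition iC : C := Complex 0 1.
Definition rC (r : R) : C := Complex r 0.

Inductive pauli := pI | pX | pY | pZ.

(* entries of the single-qubit Pauli matrices, indexed by bits
   (false = |0>, true = |1>) *)
Definition pauli_entry (p : pauli) (a b : bool) : C :=
  match p, a, b with
  | pI, false, false => 1 | pI, true, true => 1
  | pX, false, true => 1 | pX, true, false => 1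
  | pY, false, true => - iC | pY, true, false => iC
  | pZ, false, false => 1 | pZ, true, true => -1
  | _, _, _ => 0
  end.

(* k-th binary digit of a basis index; qubit k+1 <-> bit k *)
Definition qbit (a k : nat) : bool := odd (a %/ 2 ^ k).

(* Pauli string s_1 (x) ... (x) s_n on n qubits as a 2^n x 2^n matrix
   (entrywise expansion of the Kronecker product); s k is the Pauli
   acting on qubit k+1 *)
Definition pstring (n : nat) (s : nat -> pauli) : 'M[C]_(2 ^ n) :=
  \matrix_(a, b) \prod_(k < n) pauli_entry (s k) (qbit a k) (qbit b k).

(* A_j B_{j+1} (qubits numbered 1..n) *)
Definition two_site (n : nat) (A B : pauli) (j : nat) : 'M[C]_(2 ^ n) :=
  pstring n (fun k => if k.+1 == j then A else if k.+1 == j.+1 then B else pI).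

Definition one_site (n : nat) (A : pauli) (j : nat) : 'M[C]_(2 ^ n) :=
  pstring n (fun k => if k.+1 == j then A else pI).

Definition adj {m} (M : 'M[C]_m) : 'M[C]_m := (map_mx (@conjc R) M)^T.

Definition comm {m} (A B : 'M[C]_m) : 'M[C]_m := A *m B - B *m A.

Definition skew_herm {m} (A : 'M[C]_m) : Prop := adj A = - A.

(* Lie<S>: smallest real Lie subalgebra of u(m) containing { i P | P in S } *)
Definition lie_gen {m} (S : 'M[C]_m -> Prop) (M : 'M[C]_m) : Prop :=
  forall L : 'M[C]_m -> Prop,
    (forall A, L A -> skew_herm A) ->
    (forall A B, L A -> L B -> L (A + B)) ->
    (forall (r : R) A, L A -> L (rC r *: A)) ->
    (forall A B, L A -> L B -> L (comm A B)) ->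
    (forall P, S P -> L (iC *: P)) ->
    L M.

Definition a10 (n : nat) : 'M[C]_(2 ^ n) -> Prop :=
  lie_gen (fun P => exists j, (1 <= j <= n - 1)%N /\
     (P = two_site n pX pY j \/ P = two_site n pY pZ j \/ P = two_site n pZ pX j)).

Definition a7 (n : nat) : 'M[C]_(2 ^ n) -> Prop :=
  lie_gen (fun P => exists j, (1 <= j <= n - 1)%N /\
     (P = two_site n pX pX j \/ P = two_site n pY pY j \/ P = two_site n pZ pZ j)).

(* matrix power and matrix exponential (entrywise limit of the partial sums
   of the exponential series, taken separately on real and imaginary parts) *)
Definition mxpow {m} (A : 'M[C]_m) (k : nat) : 'M[C]_m := iter k (mulmx A) 1%:M.

Definition exp_partial {m} (A : 'M[C]_m) (N : nat) : 'M[C]_m :=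
  \sum_(k < N) (rC (k`!%:R)^-1 *: mxpow A k).

Definition mexp {m} (A : 'M[C]_m) : 'M[C]_m :=
  \matrix_(a, b) Complex (limn (fun N => @complex.Re R (exp_partial A N a b)))
                         (limn (fun N => @complex.Im R (exp_partial A N a b))).

Definition hamH (n : nat) : 'M[C]_(2 ^ n) :=
  \sum_(1 <= j < n.+1) (j%:R *: (one_site n pX j + one_site n pY j + one_site n pZ j)).

Definition Umat (n : nat) : 'M[C]_(2 ^ n) :=
  mexp ((iC * rC (pi / (3 * Num.sqrt 3))) *: hamH n).

End Pauli.

(* Main.v *)
Require Import Defs.
From HB Require Import structures.
From mathcomp Require Import all_boot all_order all_algebra.
From mathcomp Require Import complex.
From mathcomp Require Import boolp classical_sets reals topology normedtype sequences trigo.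
From mathcomp Require Import ring lra.
Import Order.TTheory GRing.Theory Num.Theory.
Import numFieldNormedType.Exports.
Local Open Scope ring_scope.
Set Implicit Arguments. Unset Strict Implicit. Unset Printing Implicit Defensive.

Lemma qbit0 c (b : bool) : qbit (c * 2 + b) 0 = b.
Proof. by rewrite /qbit expn0 divn1 oddD oddM /= andbF; case: b. Qed.

Lemma qbitS c (b : bool) k : qbit (c * 2 + b) k.+1 = qbit c k.
Proof.
rewrite /qbit expnS divnMA divnMDl //; case: b => //=; by rewrite addn0.
Qed.

Lemma qbit_half a k : qbit a k.+1 = qbit (a %/ 2) k.
Proof. by rewrite /qbit expnS divnMA. Qed.

Lemma qbit_inj n a b : (a < 2 ^ n)%N -> (b < 2 ^ n)%N ->
  (forall k, (k < n)%N -> qbit a k = qbit b k) -> a = b.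
Proof.
elim: n a b => [|n IH] a b.
  by rewrite expn0 !ltnS !leqn0 => /eqP-> /eqP->.
move=> Ha Hb H.
have H0 := H 0%N erefl.
rewrite (divn_eq a 2) (divn_eq b 2) !modn2.
have -> : odd a = odd b by move: H0; rewrite /qbit expn0 !divn1.
congr (_ * 2 + _)%N; apply: IH.
- by rewrite ltn_divLR // -expnSr.
- by rewrite ltn_divLR // -expnSr.
- by move=> k Hk; rewrite -!qbit_half; apply: H.
Qed.

Section Tens.
Variable R : realType.
Local Notation C := (R[i]).

Definition op2 := bool -> bool -> C.

Definition tens n (f : nat -> op2) : 'M[C]_(2 ^ n) :=
  \matrix_(a, b) \prod_(k < n) f k (qbit a k) (qbit b k).

Definition mul2 (f g : op2) : op2 := fun a b => f a false * g false b + f a true * g true b.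
Definition adj2 (f : op2) : op2 := fun a b => conjc (f b a).
Definition id2 : op2 := fun a b => (a == b)%:R.

Lemma sum_double m (G : nat -> C) :
  \sum_(0 <= c < m * 2) G c = \sum_(0 <= c < m) (G (c * 2) + G (c * 2).+1).
Proof.
elim: m => [|m IH]; first by rewrite !big_geq.
rewrite (_ : (m.+1 * 2 = (m * 2).+2)%N); last by rewrite mulSn add2n.
rewrite !big_nat_recr //= ?IH ?addrA //.

Qed.

Lemma sum_bits n (F : nat -> bool -> C) :
  \sum_(c < 2 ^ n) \prod_(k < n) F k (qbit c k) = \prod_(k < n) (F k false + F k true).
Proof.
elim: n F => [|n IH] F.
  by rewrite big_ord1 !big_ord0.
rewrite -(big_mkord xpredT (fun c => \prod_(k < n.+1) F k (qbit c k))).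
rewrite expnSr sum_double big_ord_recl.
rewrite (eq_bigr (fun c => (F 0%N false + F 0%N true) *
    \prod_(k < n) F k.+1 (qbit c k))); last first.
  move=> c _; rewrite !big_ord_recl.
  have := qbit0 c false; rewrite addn0 => ->.
  have := qbit0 c true; rewrite addn1 => ->.
  rewrite mulrDl; congr (_ * _ + _ * _); apply: eq_bigr => k _ /=.
    by have := qbitS c false k; rewrite addn0 => ->.
  by have := qbitS c true k; rewrite addn1 => ->.
rewrite -big_distrr /= big_mkord (IH (fun k => F k.+1)).
by congr (_ * _); apply: eq_bigr => i _; rewrite /bump add1n.
Qed.

Lemma tens_ext n (f g : nat -> op2) :
  (forall k a b, (k < n)%N -> f k a b = g k a b) -> tens n f = tens n g.
Proof. by move=> H; apply/matrixP => a b; rewrite !mxE; apply: eq_bigr => k _; apply: H. Qed.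

Lemma tens_mul n (f g : nat -> op2) :
  tens n f *m tens n g = tens n (fun k => mul2 (f k) (g k)).
Proof.
apply/matrixP => a b; rewrite !mxE.
rewrite (eq_bigr (fun c : 'I_(2 ^ n) => \prod_(k < n)
   (fun k β => f k (qbit a k) β * g k β (qbit b k)) k (qbit c k))); last first.
  by move=> c _; rewrite !mxE -big_split.
exact: (@sum_bits n (fun k β => f k (qbit a k) β * g k β (qbit b k))).
Qed.

Lemma tens_adj n (f : nat -> op2) :
  adj (tens n f) = tens n (fun k => adj2 (f k)).
Proof.
apply/matrixP => a b; rewrite !mxE rmorph_prod; apply: eq_bigr => k _ //.
Qed.

Lemma tens_scale n (w : nat -> C) (f : nat -> op2) :
  tens n (fun k a b => w k * f k a b) = (\prod_(k < n) w k) *: tens n f.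
Proof. by apply/matrixP => a b; rewrite !mxE big_split. Qed.

Lemma tens_sum n (c : nat -> bool -> C) (P : nat -> bool -> op2) :
  tens n (fun k a b => c k false * P k false a b + c k true * P k true a b) =
  \sum_(s < 2 ^ n) (\prod_(k < n) c k (qbit s k)) *: tens n (fun k => P k (qbit s k)).
Proof.
apply/matrixP => a b; rewrite summxE mxE.
rewrite -(@sum_bits n (fun k β => c k β * P k β (qbit a k) (qbit b k))).
by apply: eq_bigr => s _; rewrite !mxE -big_split.
Qed.

Lemma tens_id n : tens n (fun _ => id2) = 1%:M.
Proof.
apply/matrixP => a b; rewrite !mxE.
case: (eqVneq a b) => [->|Hab].
  by rewrite big1 // => k _; rewrite /id2 eqxx.
case: (boolP [exists k : 'I_n, qbit a k != qbit b k]).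
  move/existsP => [k Hk]; rewrite (bigD1 k) //= /id2 (negPf Hk) mul0r.
  by [].
move=> Hn; exfalso; move/eqP: Hab; apply.
apply/val_inj/(@qbit_inj n _ _ (ltn_ord a) (ltn_ord b)) => k Hk.
apply/eqP; move/existsPn: Hn => /(_ (Ordinal Hk)); by rewrite negbK.
Qed.

Lemma tens_add n k0 (f : nat -> op2) (h1 h2 : nat -> op2) : (k0 < n)%N ->
  tens n (fun k => if k == k0 then h1 k else f k) + tens n (fun k => if k == k0 then h2 k else f k)
  = tens n (fun k => if k == k0 then (fun a b => h1 k a b + h2 k a b) else f k).
Proof.
move=> Hk; apply/matrixP => a b; rewrite !mxE.
have E (F : 'I_n -> C) : \prod_(k < n) F k = F (Ordinal Hk) * \prod_(k < n | k != Ordinal Hk) F k.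
  by rewrite (bigD1 (Ordinal Hk)).
rewrite [X in X + _]E [X in _ + X]E [RHS]E /= eqxx mulrDl; congr (_ + _); congr (_ * _);
  apply: eq_bigr => k /= Hk';
  have -> : (val k == k0) = false by exact: (negbTE Hk').
all: by [].
Qed.

End Tens.

Section Trig.
Variable R : realType.
Definition s3 : R := Num.sqrt 3.
Lemma s3sq : s3 * s3 = 3.
Proof. by rewrite /s3 -expr2 sqr_sqrtr. Qed.
Lemma s3_gt0 : 0 < s3.
Proof. by rewrite /s3 sqrtr_gt0. Qed.

Lemma cos_pi3 : cos (pi / 3 : R) = 1 / 2 /\ sin (pi / 3 : R) = s3 / 2.
Proof.
set x := pi / 3 : R.
have hpi : pi = x + x + x by rewrite /x; field.
have c3 : cos (x + x + x) = -1 by rewrite -hpi cospi.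
rewrite !cosD !sinD in c3.
have hcs := cos2Dsin2 x.
have hp : (0:R) < pi := pi_gt0 _.
have cpos : 0 < cos x.
  apply: cos_gt0_pihalf; rewrite /x; apply/andP; split; lra.
have spos : 0 < sin x.
  apply: sin_gt0_pi; rewrite /x; apply/andP; split; lra.
have hc : cos x = 1 / 2.
  have h0 : (cos x + 1) * (2 * cos x - 1) ^+ 2 = 0.
    have hs : sin x ^+ 2 = 1 - cos x ^+ 2 by lra.
    rewrite expr2; move: c3 hs; rewrite !expr2 => c3 hs; nra.
  move/eqP: h0; rewrite mulf_eq0 => /orP [/eqP|]; first lra.
  rewrite sqrf_eq0 => /eqP; lra.
split => //.
have hs : sin x ^+ 2 = 3 / 4 by move: hcs; rewrite hc; lra.
have h0 : (sin x - s3 / 2) * (sin x + s3 / 2) = 0.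
  have := s3sq; move: hs; rewrite expr2; nra.
have := s3_gt0; move/eqP: h0; rewrite mulf_eq0 => /orP [/eqP|/eqP]; lra.
Qed.

Lemma cos_2pi3 : cos (2 * pi / 3 : R) = - (1 / 2) /\ sin (2 * pi / 3 : R) = s3 / 2.
Proof.
have -> : 2 * pi / 3 = pi / 3 + pi / 3 :> R by field.
rewrite cosD sinD; have [-> ->] := cos_pi3; have := s3sq; split; nra.
Qed.

Lemma cosDqpi x q : cos (x + q%:R * pi) = (-1) ^+ q * cos x :> R.
Proof.
elim: q => [|q IH]; first by rewrite mul0r addr0 expr0 mul1r.
by rewrite mulrSr mulrDl mul1r addrA cosDpi IH exprS mulN1r mulNr.
Qed.

Lemma sinDqpi x q : sin (x + q%:R * pi) = (-1) ^+ q * sin x :> R.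
Proof.
elim: q => [|q IH]; first by rewrite mul0r addr0 expr0 mul1r.
by rewrite mulrSr mulrDl mul1r addrA sinDpi IH exprS mulN1r mulNr.
Qed.

Definition cr (r : nat) : R := if (r == 0)%N then 1 else if (r == 1)%N then 1/2 else -(1/2).
Definition sr (r : nat) : R := if (r == 0)%N then 0 else s3 / 2.

Lemma cos_m m : exists e : R, (e = 1 \/ e = -1) /\
  cos (m%:R * pi / 3) = e * cr (m %% 3)%N /\ sin (m%:R * pi / 3) = e * sr (m %% 3)%N.
Proof.
exists ((-1) ^+ (m %/ 3)%N); split.
  by rewrite -signr_odd; case: (odd _); [right; rewrite expr1 | left; rewrite expr0].
rewrite (_ : m%:R * pi / 3 = (m %% 3)%N%:R * pi / 3 + (m %/ 3)%N%:R * pi :> R); last first.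
  rewrite {1}(divn_eq m 3) natrD natrM.
  by field.
rewrite cosDqpi sinDqpi.
have : (m %% 3 < 3)%N by rewrite ltn_mod.
rewrite /cr /sr; case: (m %% 3)%N => [|[|[|r]]] //= _.
- by rewrite !mul0r cos0 sin0 !mulr1 mulr0.
- have [h1 h2] := cos_pi3; have e : (1%N%:R * pi / 3 : R) = pi / 3 by rewrite mul1r.
  by rewrite e h1 h2; split; ring.
- have [h1 h2] := cos_2pi3; have e : (2%N%:R * pi / 3 : R) = 2 * pi / 3 by [].
  by rewrite h1 h2.
Qed.

End Trig.

Section Q.
Variable R : realType.
Local Notation C := (R[i]).
Local Notation pe := (@pauli_entry R).
Local Notation s3 := (@s3 R).
Definition gg : op2 R := fun a b => pe pX a b + pe pY a b + pe pZ a b.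
Definition sg (b : bool) : R := if b then 1 else -1.
Definition Pr (β : bool) : op2 R := fun a b =>
  @rC R (1/2) * (id2 R a b + @rC R (sg β * s3 / 3) * gg a b).
Definition uu (c s : R) : op2 R := fun a b =>
  @rC R c * id2 R a b + @iC R * @rC R (s * s3 / 3) * gg a b.

Ltac cc := apply/eqP; rewrite eq_complex /=; apply/andP; split; apply/eqP;
  have := @s3sq R; try nra.

Lemma F2 a b : Pr false a b + Pr true a b = id2 R a b.
Proof.
case: a; case: b; rewrite /Pr /gg /id2 /sg /=; cc.
Qed.

Lemma F1 β a b : mul2 (pe pX) (Pr β) a b + mul2 (pe pY) (Pr β) a b + mul2 (pe pZ) (Pr β) a b
  = @rC R (sg β * s3) * Pr β a b.
Proof.
case: a; case: b; case: β; rewrite /mul2 /Pr /gg /id2 /sg /=; cc.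
Qed.

Lemma F3 (h : op2 R) a b : mul2 (pe pI) h a b = h a b.
Proof. case: a; rewrite /mul2 /= ?mul1r ?mul0r ?addr0 ?add0r //. Qed.

Lemma F4 (c s : R) a b :
  Complex c (- s) * Pr false a b + Complex c s * Pr true a b = uu c s a b.
Proof.
case: a; case: b; rewrite /uu /Pr /gg /id2 /sg /=; cc.
Qed.

Definition rot (m : nat) (p : pauli) : pauli :=
  match p with
  | pI => pI
  | pX => if (m %% 3 == 0)%N then pX else if (m %% 3 == 1)%N then pZ else pY
  | pY => if (m %% 3 == 0)%N then pY else if (m %% 3 == 1)%N then pX else pZ
  | pZ => if (m %% 3 == 0)%N then pZ else if (m %% 3 == 1)%N then pY else pX
  end.

Lemma F5 m (e : R) p a b : e = 1 \/ e = -1 ->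
  mul2 (mul2 (uu (e * cr R (m %% 3)) (e * sr R (m %% 3))) (pe p))
       (adj2 (uu (e * cr R (m %% 3)) (e * sr R (m %% 3)))) a b
  = pe (rot m p) a b.
Proof.
rewrite /rot /cr /sr; have : (m %% 3 < 3)%N by rewrite ltn_mod.
case: (m %% 3)%N => [|[|[|r]]] //= _;
case=> ->; case: p; case: a; case: b; rewrite /mul2 /adj2 /uu /gg /id2 /=; cc.
Qed.

End Q.

Section Exp.
Local Open Scope classical_set_scope.
Variable R : realType.
Local Notation C := (R[i]).

Lemma pow_it (t : R) k : (@iC R * @rC R t) ^+ k =
  Complex ((~~ odd k)%:R * (-1) ^+ k./2 * t ^+ k) ((odd k)%:R * (-1) ^+ k.-1./2 * t ^+ k).
Proof.
elim: k => [|k IH].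
  by rewrite expr0; apply/eqP; rewrite eq_complex /= !expr0 ?mulr1 ?mul0r ?eqxx.
rewrite exprS IH; apply/eqP; rewrite eq_complex /= uphalf_half.
have hk : odd k -> k.-1./2 = k./2.
  by move=> Ho; rewrite -{1}(odd_double_half k) Ho add1n /= doubleK.
case Ho: (odd k) => /=; rewrite ?(hk Ho) ?add1n ?add0n !exprSr; apply/andP; split; apply/eqP; ring.
Qed.

Definition ep (N : nat) (z : C) : C := \sum_(k < N) @rC R (k`!%:R^-1) * z ^+ k.

Lemma ReD (x y : C) : complex.Re (x + y) = complex.Re x + complex.Re y.
Proof. by case: x; case: y. Qed.
Lemma ImD (x y : C) : complex.Im (x + y) = complex.Im x + complex.Im y.
Proof. by case: x; case: y. Qed.
Lemma Re_sum I (r : seq I) (F : I -> C) : complex.Re (\sum_(i <- r) F i) = \sum_(i <- r) complex.Re (F i).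
Proof. by apply: (big_morph _ ReD). Qed.
Lemma Im_sum I (r : seq I) (F : I -> C) : complex.Im (\sum_(i <- r) F i) = \sum_(i <- r) complex.Im (F i).
Proof. by apply: (big_morph _ ImD). Qed.

Lemma Re_ep N t : complex.Re (ep N (@iC R * @rC R t)) = series (cos_coeff t) N.
Proof.
rewrite /ep Re_sum /series /= -(big_mkord xpredT (fun k => complex.Re (@rC R (k`!%:R^-1) * (@iC R * @rC R t) ^+ k))).
apply: eq_bigr => k _; rewrite pow_it /= /cos_coeff /= -exprnP; ring.
Qed.

Lemma Im_ep N t : complex.Im (ep N (@iC R * @rC R t)) = series (sin_coeff t) N.
Proof.
rewrite /ep Im_sum /series /= -(big_mkord xpredT (fun k => complex.Im (@rC R (k`!%:R^-1) * (@iC R * @rC R t) ^+ k))).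
apply: eq_bigr => k _; rewrite pow_it /= /sin_coeff /=; ring.
Qed.

Lemma cvg_cos (t : R) : series (cos_coeff t) @ \oo --> cos t.
Proof. rewrite unlock; exact: is_cvg_series_cos_coeff. Qed.
Lemma cvg_sin (t : R) : series (sin_coeff t) @ \oo --> sin t.
Proof. rewrite unlock; exact: is_cvg_series_sin_coeff. Qed.


Lemma ReM (x y : C) : complex.Re (x * y) = complex.Re x * complex.Re y - complex.Im x * complex.Im y.
Proof. by case: x; case: y. Qed.
Lemma ImM (x y : C) : complex.Im (x * y) = complex.Re x * complex.Im y + complex.Im x * complex.Re y.
Proof. by case: x; case: y. Qed.

Lemma cvg_sumr I (r : seq I) (f : I -> nat -> R) (l : I -> R) :
  (forall i, f i @ \oo --> l i) ->
  (fun N => \sum_(i <- r) f i N) @ \oo --> \sum_(i <- r) l i.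
Proof.
move=> H; elim: r => [|i r IH].
  rewrite big_nil; have -> : (fun N => \sum_(i <- [::]) f i N) = fun _ => 0.
    by apply/funext => N; rewrite big_nil.
  exact: cvg_cst.
rewrite big_cons; have -> : (fun N => \sum_(j <- i :: r) f j N) =
   (fun N => f i N + \sum_(j <- r) f j N).
  by apply/funext => N; rewrite big_cons.
exact: (cvgD (H i) IH).
Qed.

Definition Ec (t : R) : C := Complex (cos t) (sin t).

Lemma mexp_diag m (A : 'M[C]_m) M (t : 'I_M -> R) (Q : 'I_M -> 'M[C]_m) :
  (forall N, exp_partial A N = \sum_(s < M) ep N (@iC R * @rC R (t s)) *: Q s) ->
  mexp A = \sum_(s < M) Ec (t s) *: Q s.
Proof.
move=> H; apply/matrixP => a b; rewrite !mxE summxE.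
have -> : (fun N => complex.Re (exp_partial A N a b)) = (fun N => \sum_(s < M)
   (series (cos_coeff (t s)) N * complex.Re (Q s a b) - series (sin_coeff (t s)) N * complex.Im (Q s a b))).
  apply/funext => N; rewrite H summxE Re_sum; apply: eq_bigr => s _.
  by rewrite mxE ReM Re_ep Im_ep.
have -> : (fun N => complex.Im (exp_partial A N a b)) = (fun N => \sum_(s < M)
   (series (cos_coeff (t s)) N * complex.Im (Q s a b) + series (sin_coeff (t s)) N * complex.Re (Q s a b))).
  apply/funext => N; rewrite H summxE Im_sum; apply: eq_bigr => s _.
  by rewrite mxE ImM Re_ep Im_ep.
apply/eqP; rewrite eq_complex Re_sum Im_sum; apply/andP; split; apply/eqP.
- apply: cvg_lim => //.
  rewrite (eq_bigr (fun s => cos (t s) * complex.Re (Q s a b) - sin (t s) * complex.Im (Q s a b))); last first.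
    by move=> s _; rewrite mxE ReM.
  apply: (@cvg_sumr _ _ (fun s N => series (cos_coeff (t s)) N * complex.Re (Q s a b) -
      series (sin_coeff (t s)) N * complex.Im (Q s a b))) => s.
  apply: cvgB; apply: cvgMr_tmp; [exact: cvg_cos | exact: cvg_sin].
- rewrite /=; apply: cvg_lim => //.
  rewrite (eq_bigr (fun s => cos (t s) * complex.Im (Q s a b) + sin (t s) * complex.Re (Q s a b))); last first.
    by move=> s _; rewrite mxE ImM.
  apply: (@cvg_sumr _ _ (fun s N => series (cos_coeff (t s)) N * complex.Im (Q s a b) +
      series (sin_coeff (t s)) N * complex.Re (Q s a b))) => s.
  apply: cvgD; apply: cvgMr_tmp; [exact: cvg_cos | exact: cvg_sin].
Qed.
End Exp.

Section Main.
Variable R : realType.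
Local Notation C := (R[i]).
Local Notation pe := (@pauli_entry R).
Local Notation s3 := (@s3 R).
Local Notation Pr := (@Pr R).
Local Notation sg := (@sg R).
Variable n : nat.

Definition Qm (s : 'I_(2 ^ n)) : 'M[C]_(2 ^ n) := tens n (fun k => Pr (qbit s k)).

Lemma pstring_tens (σ : nat -> pauli) : @pstring R n σ = tens n (fun k => pe (σ k)).
Proof. by []. Qed.

Lemma one_site_tens p k0 : @one_site R n p k0.+1 = tens n (fun k => if k == k0 then pe p else pe pI).
Proof. by rewrite /one_site pstring_tens; apply: tens_ext => k a b _; rewrite eqSS; case: (k == k0). Qed.

Lemma Gq k0 (s : 'I_(2 ^ n)) : (k0 < n)%N ->
  (@one_site R n pX k0.+1 + @one_site R n pY k0.+1 + @one_site R n pZ k0.+1) *m Qm s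
  = @rC R (sg (qbit s k0) * s3) *: Qm s.
Proof.
move=> Hk; rewrite !mulmxDl !one_site_tens /Qm !tens_mul.
have E p : tens n (fun k => mul2 (if k == k0 then pe p else pe pI) (Pr (qbit s k))) =
   tens n (fun k => if k == k0 then (fun k => mul2 (pe p) (Pr (qbit s k))) k else Pr (qbit s k)).
  by apply: tens_ext => k a b _; case: (k == k0) => //; rewrite F3.
rewrite !E !tens_add //.
rewrite (@tens_ext _ n _ (fun k a b => (if k == k0 then @rC R (sg (qbit s k0) * s3) else 1)
   * Pr (qbit s k) a b)); last first.
  move=> k a b _; case: eqP => [->|_]; last by rewrite mul1r.
  by rewrite F1.
rewrite tens_scale (bigD1 (Ordinal Hk)) //= eqxx big1 ?mulr1 //.
by move=> k /negbTE Hk'; have -> : (val k == k0) = false by exact: Hk'.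
Qed.

Definition Amat : 'M[C]_(2 ^ n) := (@iC R * @rC R (pi / (3 * Num.sqrt 3))) *: @hamH R n.

Definition lam (s : 'I_(2 ^ n)) : C := (@iC R * @rC R (pi / (3 * Num.sqrt 3))) *
   \sum_(k < n) ((k.+1)%:R * @rC R (sg (qbit s k) * s3)).

Lemma AQ s : Amat *m Qm s = lam s *: Qm s.
Proof.
rewrite /Amat /hamH -scalemxAl mulmx_suml big_add1 /= big_mkord.
rewrite (eq_bigr (fun k : 'I_n => ((k.+1)%:R * @rC R (sg (qbit s k) * s3)) *: Qm s)); last first.
  by move=> k _; rewrite -scalemxAl Gq // scalerA.
by rewrite -scaler_suml scalerA.
Qed.


Lemma sumQ : \sum_(s < 2 ^ n) Qm s = 1%:M.
Proof.
rewrite -(tens_id R n).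
rewrite (@tens_ext _ n _ (fun k a b => 1 * Pr false a b + 1 * Pr true a b)); last first.
  by move=> k a b _; rewrite !mul1r F2.
rewrite (tens_sum n (fun _ _ => 1) (fun _ => Pr)); apply: eq_bigr => s _.
by rewrite big1 ?scale1r.
Qed.

Lemma powQ k s : mxpow Amat k *m Qm s = lam s ^+ k *: Qm s.
Proof.
elim: k => [|k IH]; first by rewrite /mxpow /= mul1mx expr0 scale1r.
rewrite /mxpow iterS -/(mxpow Amat k) -mulmxA IH -scalemxAr AQ scalerA.
by rewrite exprSr.
Qed.

Lemma powE k : mxpow Amat k = \sum_(s < 2 ^ n) lam s ^+ k *: Qm s.
Proof.
by rewrite -[mxpow Amat k]mulmx1 -sumQ mulmx_sumr; apply: eq_bigr => s _; rewrite powQ.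
Qed.

Lemma exp_partialE N : exp_partial Amat N = \sum_(s < 2 ^ n) ep N (lam s) *: Qm s.
Proof.
rewrite /exp_partial (eq_bigr (fun k : 'I_N => \sum_(s < 2 ^ n)
   (@rC R (k`!%:R^-1) * lam s ^+ k) *: Qm s)); last first.
  by move=> k _; rewrite powE scaler_sumr; apply: eq_bigr => s _; rewrite scalerA.
rewrite exchange_big /=; apply: eq_bigr => s _.
by rewrite /ep scaler_suml.
Qed.


Lemma rCE (x : R) : @rC R x = real_complex R x.
Proof. by []. Qed.

Lemma rCD (x y : R) : @rC R (x + y) = @rC R x + @rC R y.
Proof. apply/eqP; rewrite eq_complex /=; apply/andP; split; apply/eqP; ring. Qed.
Lemma rCM (x y : R) : @rC R (x * y) = @rC R x * @rC R y.
Proof. apply/eqP; rewrite eq_complex /=; apply/andP; split; apply/eqP; ring. Qed.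
Lemma rC0 : @rC R 0 = 0.
Proof. by []. Qed.
Lemma rC_sum I (r : seq I) (F : I -> R) : @rC R (\sum_(i <- r) F i) = \sum_(i <- r) @rC R (F i).
Proof. by apply: (big_morph _ rCD rC0). Qed.

Definition al (k : nat) : R := (k.+1)%:R * pi / 3.
Definition tt (s : 'I_(2 ^ n)) : R := \sum_(k < n) sg (qbit s k) * al k.

Lemma lamE s : lam s = @iC R * @rC R (tt s).
Proof.
rewrite /lam -mulrA; congr (_ * _).
have hn m : (m%:R : C) = @rC R (m%:R).
  elim: m => [|m IH]; first by [].
  by rewrite -addn1 !natrD IH rCD.
under eq_bigr => k _ do rewrite hn -rCM.
rewrite -rC_sum -rCM; congr (@rC R _).
rewrite /tt big_distrr; apply: eq_bigr => k _ /=.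
have h3 : s3 != 0 by rewrite gt_eqF // s3_gt0.
rewrite /al -[Num.sqrt 3]/(s3); field.
by rewrite h3.
Qed.

Lemma EcD x y : Ec (x + y) = Ec x * Ec y :> C.
Proof. by apply/eqP; rewrite eq_complex /= cosD sinD; apply/andP; split; apply/eqP; ring. Qed.
Lemma Ec0 : Ec 0 = 1 :> C.
Proof. by apply/eqP; rewrite eq_complex /= cos0 sin0 !eqxx. Qed.

Lemma Ec_tt s : Ec (tt s) = \prod_(k < n) Ec (sg (qbit s k) * al k).
Proof. by rewrite /tt; apply: (big_morph _ EcD Ec0). Qed.

Lemma UE : Umat R n = tens n (fun k => uu (cos (al k)) (sin (al k))).
Proof.
have -> : Umat R n = \sum_(s < 2 ^ n) Ec (tt s) *: Qm s.
  apply: (mexp_diag (A := Amat)) => N; rewrite exp_partialE.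
  by apply: eq_bigr => s _; rewrite lamE.
rewrite (eq_bigr (fun s : 'I_(2 ^ n) => (\prod_(k < n) (fun k b => Ec (sg b * al k)) k (qbit s k)) *: Qm s)); last first.
  by move=> s _; rewrite Ec_tt.
rewrite -(tens_sum n (fun k b => Ec (sg b * al k)) (fun _ => Pr)).
apply: tens_ext => k a b _ /=.
by rewrite /Ec /sg mulN1r mul1r cosN sinN F4.
Qed.

End Main.

Section Gen.
Variable R : realType.
Local Notation C := (R[i]).
Variable m : nat.
Implicit Types A B : 'M[C]_m.

Lemma adjD A B : adj (A + B) = adj A + adj B.
Proof. by apply/matrixP => a b; rewrite !mxE rmorphD. Qed.
Lemma adjN A : adj (- A) = - adj A.
Proof. by apply/matrixP => a b; rewrite !mxE rmorphN. Qed.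
Lemma adjZ c A : adj (c *: A) = conjc c *: adj A.
Proof. by apply/matrixP => a b; rewrite !mxE rmorphM. Qed.
Lemma adjM A B : adj (A *m B) = adj B *m adj A.
Proof.
apply/matrixP => a b; rewrite !mxE rmorph_sum; apply: eq_bigr => k _.
by rewrite !mxE rmorphM mulrC.
Qed.
Lemma adjK A : adj (adj A) = A.
Proof. by apply/matrixP => a b; rewrite !mxE conjcK. Qed.

Lemma conj_rC (r : R) : conjc (@rC R r) = @rC R r.
Proof. by rewrite /rC /= oppr0. Qed.
Lemma conj_iC : conjc (@iC R) = - @iC R.
Proof. by rewrite /iC /=; apply/eqP; rewrite eq_complex /= oppr0 !eqxx. Qed.

Lemma skewD A B : skew_herm A -> skew_herm B -> skew_herm (A + B).
Proof. by rewrite /skew_herm adjD => -> ->; rewrite opprD. Qed.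
Lemma skewZ (r : R) A : skew_herm A -> skew_herm (@rC R r *: A).
Proof. by rewrite /skew_herm adjZ conj_rC => ->; rewrite scalerN. Qed.
Lemma skewC A B : skew_herm A -> skew_herm B -> skew_herm (comm A B).
Proof.
rewrite /skew_herm /comm adjD adjN !adjM => -> ->.
by rewrite !mulNmx !mulmxN !opprK opprB.
Qed.
Lemma skewH (P : 'M[C]_m) : adj P = P -> skew_herm (@iC R *: P).
Proof. by rewrite /skew_herm adjZ conj_iC => ->; rewrite scaleNr. Qed.

Lemma lie_add (S : 'M[C]_m -> Prop) A B : lie_gen S A -> lie_gen S B -> lie_gen S (A + B).
Proof. move=> hA hB; rewrite /lie_gen => L h1 h2 h3 h4 h5.
apply: (h2); [exact: (hA L h1 h2 h3 h4 h5)|exact: (hB L h1 h2 h3 h4 h5)]. Qed.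
Lemma lie_scale (S : 'M[C]_m -> Prop) (r : R) A : lie_gen S A -> lie_gen S (@rC R r *: A).
Proof. move=> hA; rewrite /lie_gen => L h1 h2 h3 h4 h5.
by apply: (h3); exact: (hA L h1 h2 h3 h4 h5). Qed.
Lemma lie_comm (S : 'M[C]_m -> Prop) A B : lie_gen S A -> lie_gen S B -> lie_gen S (comm A B).
Proof. move=> hA hB; rewrite /lie_gen => L h1 h2 h3 h4 h5.
by apply: (h4); [exact: (hA L h1 h2 h3 h4 h5)|exact: (hB L h1 h2 h3 h4 h5)]. Qed.
Lemma lie_base (S : 'M[C]_m -> Prop) (P : 'M[C]_m) : S P -> lie_gen S (@iC R *: P).
Proof. move=> hP; rewrite /lie_gen => L h1 h2 h3 h4 h5.
by apply: h5. Qed.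

Variable U : 'M[C]_m.
Hypothesis hU : U *m adj U = 1%:M.
Hypothesis hU' : adj U *m U = 1%:M.
Let phi A := U *m A *m adj U.

Lemma phiD A B : phi (A + B) = phi A + phi B.
Proof. by rewrite /phi mulmxDr mulmxDl. Qed.
Lemma phiZ c A : phi (c *: A) = c *: phi A.
Proof. by rewrite /phi -scalemxAr -scalemxAl. Qed.
Lemma phiM A B : phi (A *m B) = phi A *m phi B.
Proof.
by rewrite /phi !mulmxA -[U *m A *m adj U *m U]mulmxA hU' mulmx1.
Qed.
Lemma phiC A B : phi (comm A B) = comm (phi A) (phi B).
Proof. by rewrite /comm /phi mulmxBr mulmxBl -!/(phi _) !phiM. Qed.
Lemma phi_skew A : skew_herm A -> skew_herm (phi A).
Proof.
rewrite /skew_herm /phi => hA.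
by rewrite !adjM adjK hA mulNmx mulmxN mulmxA.
Qed.
Lemma phi_inj A B : phi A = phi B -> A = B.
Proof.
move=> h; have := congr1 (fun X => adj U *m X *m U) h; rewrite /phi.
by rewrite !mulmxA hU' !mul1mx -!mulmxA hU' !mulmx1.
Qed.

End Gen.

Lemma rot_pairs j : rot j pX = rot j.+1 pY /\ rot j pY = rot j.+1 pZ /\ rot j pZ = rot j.+1 pX.
Proof.
rewrite /rot; have -> : (j.+1 %% 3 = ((j %% 3) + 1) %% 3)%N by rewrite modnDml addn1.
have : (j %% 3 < 3)%N by rewrite ltn_mod.
by case: (j %% 3)%N => [|[|[|]]].
Qed.

Lemma rot_onto j (p : pauli) : p <> pI -> rot j pX = p \/ rot j pY = p \/ rot j pZ = p.
Proof.
rewrite /rot; have : (j %% 3 < 3)%N by rewrite ltn_mod.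
by case: (j %% 3)%N => [|[|[|]]] // _; case: p => //= _; auto.
Qed.

Lemma rot_nI j p : p <> pI -> rot j p <> pI.
Proof. by rewrite /rot; case: p => // _; case: ifP => _ //; case: ifP. Qed.

Section Spec.
Variable R : realType.
Local Notation C := (R[i]).
Local Notation pe := (@pauli_entry R).
Variable n : nat.

Lemma pstring_ext (σ τ : nat -> pauli) : (forall k, (k < n)%N -> σ k = τ k) ->
  @pstring R n σ = @pstring R n τ.
Proof. by move=> H; rewrite !pstring_tens; apply: tens_ext => k a b /H ->. Qed.

Lemma pauli_herm (σ : nat -> pauli) : adj (@pstring R n σ) = @pstring R n σ.
Proof.
rewrite pstring_tens tens_adj; apply: tens_ext => k a b _.
rewrite /adj2; case: (σ k); case: a; case: b => //=;
  by apply/eqP; rewrite eq_complex /= ?oppr0 ?opprK ?eqxx.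
Qed.

Lemma phi_pstring (σ : nat -> pauli) :
  Umat R n *m @pstring R n σ *m adj (Umat R n) = @pstring R n (fun k => rot k.+1 (σ k)).
Proof.
rewrite UE pstring_tens tens_adj !tens_mul pstring_tens; apply: tens_ext => k a b _.
have [e [he [hc hs]]] := cos_m R k.+1.
by rewrite /al hc hs F5.
Qed.

Lemma pstring_one : @pstring R n (fun _ => pI) = 1%:M.
Proof.
rewrite pstring_tens -(tens_id R n); apply: tens_ext => k a b _.
by case: a; case: b.
Qed.

Lemma U_unit : Umat R n *m adj (Umat R n) = 1%:M.
Proof.
have := phi_pstring (fun _ => pI); rewrite /= pstring_one mulmx1 => ->.
by [].
Qed.

Lemma U_unit' : adj (Umat R n) *m Umat R n = 1%:M.
Proof. exact: mulmx1C U_unit. Qed.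

Lemma phi_two A B j :
  Umat R n *m @two_site R n A B j *m adj (Umat R n) = @two_site R n (rot j A) (rot j.+1 B) j.
Proof.
rewrite /two_site phi_pstring; apply: pstring_ext => k _.
case: eqP => [<-|_] //; case: eqP => [<-|_] //.
Qed.

End Spec.

Unset Implicit Arguments.

Lemma gen10 (R : realType) (n : nat) (P : 'M[R[i]]_(2 ^ n)) :
  (exists j, (1 <= j <= n - 1)%N /\
     (P = @two_site R n pX pY j \/ P = @two_site R n pY pZ j \/ P = @two_site R n pZ pX j)) ->
  exists j, (1 <= j <= n - 1)%N /\
     (Umat R n *m P *m adj (Umat R n) = @two_site R n pX pX j \/
      Umat R n *m P *m adj (Umat R n) = @two_site R n pY pY j \/
      Umat R n *m P *m adj (Umat R n) = @two_site R n pZ pZ j).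
Proof.
move=> [j [hj hP]]; exists j; split => //.
have [h1 [h2 h3]] := rot_pairs j.
have key q : q <> pI -> @two_site R n q q j = @two_site R n pX pX j \/
    @two_site R n q q j = @two_site R n pY pY j \/ @two_site R n q q j = @two_site R n pZ pZ j :> 'M[R[i]]_(2 ^ n).
  by case: q => // _; auto.
case: hP => [->|[->|->]]; rewrite phi_two.
- by rewrite -h1; apply: key; apply: rot_nI.
- by rewrite -h2; apply: key; apply: rot_nI.
- by rewrite -h3; apply: key; apply: rot_nI.
Qed.

Lemma gen7 (R : realType) (n : nat) (P : 'M[R[i]]_(2 ^ n)) :
  (exists j, (1 <= j <= n - 1)%N /\
     (P = @two_site R n pX pX j \/ P = @two_site R n pY pY j \/ P = @two_site R n pZ pZ j)) ->
  exists Q, (exists j, (1 <= j <= n - 1)%N /\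
     (Q = @two_site R n pX pY j \/ Q = @two_site R n pY pZ j \/ Q = @two_site R n pZ pX j)) /\
     Umat R n *m Q *m adj (Umat R n) = P.
Proof.
move=> [j [hj hP]].
have [h1 [h2 h3]] := rot_pairs j.
have key q : q <> pI -> P = @two_site R n q q j -> exists Q, (exists j, (1 <= j <= n - 1)%N /\
     (Q = @two_site R n pX pY j \/ Q = @two_site R n pY pZ j \/ Q = @two_site R n pZ pX j)) /\
     Umat R n *m Q *m adj (Umat R n) = P.
  move=> hq ->; case: (rot_onto j hq) => [e|[e|e]].
  - exists (@two_site R n pX pY j); split; first by exists j; split => //; left.
    by rewrite phi_two -h1 e.
  - exists (@two_site R n pY pZ j); split; first by exists j; split => //; right; left.
    by rewrite phi_two -h2 e.
  - exists (@two_site R n pZ pX j); split; first by exists j; split => //; right; right.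
    by rewrite phi_two -h3 e.
by case: hP => [e|[e|e]]; apply: (key _ _ e).
Qed.

Theorem mainTheorem13 (R : realType) (n : nat) : (2 <= n)%N ->
  let U := Umat R n in
  let phi := fun a : 'M[R[i]]_(2 ^ n) => U *m a *m adj U in
  (* phi maps a10(n) into a7(n) ... *)
  (forall a, a10 a -> a7 (phi a)) /\
  (* ... onto a7(n) ... *)
  (forall b, a7 b -> exists a, a10 a /\ phi a = b) /\
  (* ... injectively on a10(n) ... *)
  (forall a b, a10 a -> a10 b -> phi a = phi b -> a = b) /\
  (* ... and as a homomorphism of real Lie algebras *)
  (forall a b, a10 a -> a10 b -> phi (a + b) = phi a + phi b) /\
  (forall (r : R) a, a10 a -> phi (rC r *: a) = rC r *: phi a) /\
  (forall a b, a10 a -> a10 b -> phi (comm a b) = comm (phi a) (phi b)).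
Proof.
move=> _ U phi.
have hU' : adj U *m U = 1%:M := U_unit' R n.
have herm j A B : adj (@two_site R n A B j) = @two_site R n A B j :> 'M[R[i]]_(2 ^ n).
  exact: pauli_herm.
split.
  move=> a Ha.
  suff : skew_herm a /\ a7 (phi a) by case.
  apply: (Ha (fun x => skew_herm x /\ a7 (phi x))).
  - by move=> A [].
  - move=> A B [sA pA] [sB pB]; split; first exact: skewD.
    by rewrite /phi phiD; apply: lie_add.
  - move=> r A [sA pA]; split; first exact: skewZ.
    by rewrite /phi phiZ; apply: lie_scale.
  - move=> A B [sA pA] [sB pB]; split; first exact: skewC.
    by rewrite /phi phiC //; apply: lie_comm.
  - move=> P hP; split.
      apply: skewH; case: hP => [j [_ [->|[->|->]]]]; exact: herm.
    rewrite /phi phiZ; apply: lie_base; exact: gen10.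
split.
  move=> b Hb.
  suff : skew_herm b /\ exists a, a10 a /\ phi a = b by case.
  apply: (Hb (fun y => skew_herm y /\ exists a, a10 a /\ phi a = y)).
  - by move=> A [].
  - move=> A B [sA [a [ha ea]]] [sB [b' [hb eb]]]; subst A B; split; first exact: skewD.
    by exists (a + b'); split; [apply: lie_add | rewrite /phi phiD].
  - move=> r A [sA [a [ha ea]]]; subst A; split; first exact: skewZ.
    by exists (rC r *: a); split; [apply: lie_scale | rewrite /phi phiZ].
  - move=> A B [sA [a [ha ea]]] [sB [b' [hb eb]]]; subst A B; split; first exact: skewC.
    by exists (comm a b'); split; [apply: lie_comm | rewrite /phi phiC].
  - move=> P hP; split.
      apply: skewH; case: hP => [j [_ [->|[->|->]]]]; exact: herm.
    have [Q [hQ <-]] := gen7 _ _ _ hP.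
    by exists (@iC R *: Q); split; [apply: lie_base | rewrite /phi phiZ].
split.
  by move=> a b _ _; apply: phi_inj.
split; first by move=> a b _ _; rewrite /phi phiD.
split; first by move=> r a _; rewrite /phi phiZ.
by move=> a b _ _; rewrite /phi phiC.
Qed.
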